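(* Let $n=2$, let $\mathcal{D}$ be the set of strictly positive piecewise-constant functions $[0,1]\to\mathbb{R}_{>0}$, and let $\mathcal{M}$ be a mechanism on $\mathcal{D}\times\mathcal{D}$ that is truthful and proportional. Let $F^1=(f_1^1,f_2^1)$ with $f_1^1\equiv f_2^1\equiv 1$ on $[0,1]$, and put $X_1=\mathcal{M}_1(F^1)$, $X_2=\mathcal{M}_2(F^1)$. Assume $X_1,X_2$ are such that the functions below are piecewise-constant (e.g. $X_1,X_2$ finite unions of intervals). Fix $\varepsilon\in(0,1)$ and let $F^2=(f_1^2,f_2^2)$ where $f_1^2\equiv 1$ on $[0,1]$ and $f_2^2(x)=\varepsilon$ for $x\in X_1$, $f_2^2(x)=1$ for $x\in X_2$ (and, say, $f_2^2=1$ on the null set $[0,1]\setminus(X_1\cup X_2)$). Then $|X_1|=|X_2|=\frac12$, and $\mathcal{M}_1(F^2)=X_1$ and $\mathcal{M}_2(F^2)=X_2$ up to sets of Lebesgue measure zero.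
   Context: Agent $i$'s utility for a measurable $X\subseteq[0,1]$ is $v_i(X)=\int_X f_i$; $|X|$ is Lebesgue measure. An allocation is a pair of disjoint measurable subsets of $[0,1]$ (not necessarily covering $[0,1]$); $\mathcal{M}_i(F)$ is agent $i$'s piece. Proportional: $v_i(\mathcal{M}_i(F))\ge\frac12 v_i([0,1])$ for each $i$ w.r.t. the reported densities. Truthful: for each agent $i$, any profile and any alternative report $f_i'$ in the domain, agent $i$'s utility (w.r.t. the true $f_i$) from the truthful report is at least that from reporting $f_i'$, the other report held fixed. *)

(* Defs.v *)
From mathcomp Require Import all_boot all_algebra all_classical all_reals all_analysis.
Import GRing.Theory Num.Theory.

Set Implicit Arguments.
Unset Strict Implicit.
Unset Printing Implicit Defensive.

Local Open Scope classical_set_scope.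
Local Open Scope ring_scope.

(* The real line equipped with the Lebesgue (i.e. completed) sigma-algebra;
   its carrier is R itself. *)
Definition LR (R : realType) : measurableType _ :=
  caratheodory_type (R:=R) ((wlength (R:=R) idfun)^*%mu).

Definition leb (R : realType) : set (LR R) -> \bar R :=
  @completed_lebesgue_measure R.

Definition piecewise_constant (R : realType) (f : R -> R) : Prop :=
  exists (n : nat) (a : nat -> R),
    [/\ a 0%N = 0, a n = 1,
        (forall i, (i < n)%N -> a i < a i.+1) &
        (forall i, (i < n)%N -> exists c : R,
            forall x : R, a i < x < a i.+1 -> f x = c)].

Definition in_dom (R : realType) (f : R -> R) : Prop :=
  piecewise_constant f /\ (forall x : R, 0 <= x <= 1 -> 0 < f x).

Definition mechanism (R : realType) := (R -> R) -> (R -> R) -> set (LR R) * set (LR R).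

Definition unit_itv (R : realType) : set (LR R) := `[(0:R), (1:R)]%classic.

Definition util (R : realType) (f : R -> R) (X : set (LR R)) : \bar R :=
  (\int[@leb R]_(x in X) (f x)%:E)%E.

Definition allocation (R : realType) (X : set (LR R) * set (LR R)) : Prop :=
  [/\ measurable X.1, measurable X.2,
      X.1 `<=` @unit_itv R, X.2 `<=` @unit_itv R & X.1 `&` X.2 = set0].

Definition valid_mechanism (R : realType) (M : mechanism R) : Prop :=
  forall f1 f2, in_dom f1 -> in_dom f2 -> allocation (M f1 f2).

Definition proportional (R : realType) (M : mechanism R) : Prop :=
  forall f1 f2 : R -> R, in_dom f1 -> in_dom f2 ->
    ((2^-1)%:E * util f1 (@unit_itv R) <= util f1 (M f1 f2).1)%E /\
    ((2^-1)%:E * util f2 (@unit_itv R) <= util f2 (M f1 f2).2)%E.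

Definition truthful (R : realType) (M : mechanism R) : Prop :=
  (forall f1 f2 f1' : R -> R, in_dom f1 -> in_dom f2 -> in_dom f1' ->
     (util f1 (M f1' f2).1 <= util f1 (M f1 f2).1)%E) /\
  (forall f1 f2 f2' : R -> R, in_dom f1 -> in_dom f2 -> in_dom f2' ->
     (util f2 (M f1 f2').2 <= util f2 (M f1 f2).2)%E).

(* Symmetric difference; "A = B up to a null set" means leb (symdiff A B) = 0. *)
Definition symdiff (T : Type) (A B : set T) : set T := (A `\` B) `|` (B `\` A).

(* Main.v *)
Require Import Defs.
From mathcomp Require Import all_boot all_algebra all_classical all_reals all_analysis.
From mathcomp Require Import lra.
Import order.Order.TTheory GRing.Theory Num.Theory.
Local Open Scope classical_set_scope.
Local Open Scope ring_scope.

Section H.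
Variable R : realType.
Notation U := (@unit_itv R).
Notation mu := (@leb R).
Implicit Types A B : set (LR R).

Lemma leb_unit : mu U = 1%E.
Proof.
have -> : mu U = @lebesgue_measure R `[(0:R), (1:R)] by [].
by rewrite lebesgue_measure_itv /= lte_fin ltr01 oppr0 adde0.
Qed.

Lemma munit : measurable U.
Proof. apply: sub_caratheodory. exact: measurable_itv. Qed.

Definition m A : R := fine (mu A).

Lemma mE A : measurable A -> A `<=` U -> mu A = (m A)%:E.
Proof.
move=> mA sA; rewrite /m fineK // ge0_fin_numE ?measure_ge0 //.
apply: (le_lt_trans (y := mu U)); last by rewrite leb_unit ltry.
by apply: le_measure => //; rewrite inE //; exact: munit.
Qed.

Lemma m_ge0 A : 0 <= m A.
Proof. by apply: fine_ge0; exact: measure_ge0. Qed.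

Lemma mU A B : measurable A -> measurable B -> A `<=` U -> B `<=` U ->
  A `&` B = set0 -> m (A `|` B) = m A + m B.
Proof.
move=> mA mB sA sB AB; apply: EFin_inj; rewrite EFinD -!mE //.
- exact: measureU.
- exact: measurableU.
- by move=> x [/sA|/sB].
Qed.

Lemma mDI A B : measurable A -> measurable B -> A `<=` U ->
  m A = m (A `\` B) + m (A `&` B).
Proof.
move=> mA mB sA; apply: EFin_inj; rewrite EFinD -!mE //.
- exact: measureDI.
- exact: measurableI.
- by move=> x [/sA].
- exact: measurableD.
- by move=> x [/sA].
Qed.

Lemma mle A B : measurable A -> measurable B -> B `<=` U -> A `<=` B ->
  m A <= m B.
Proof.
move=> mA mB sB AB; rewrite -lee_fin -!mE //; last exact: subset_trans sB.
by apply: le_measure => //; rewrite inE.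
Qed.

Lemma mU2 A B : measurable A -> measurable B -> A `<=` U -> B `<=` U ->
  m (A `|` B) <= m A + m B.
Proof.
move=> mA mB sA sB; rewrite -lee_fin EFinD -!mE //.
- exact: measureU2.
- exact: measurableU.
- by move=> x [/sA|/sB].
Qed.

Lemma m_unit : m U = 1.
Proof. by rewrite /m leb_unit. Qed.

Lemma util_one A : measurable A -> util (fun _ => 1) A = mu A.
Proof.
by move=> mA; rewrite /util (integral_cst mu mA 1) mul1e.
Qed.

Lemma util_f22 (X : set (LR R)) (eps : R) A : measurable A -> measurable X ->
  util (fun x => if x \in X then eps else 1) A =
  (eps%:E * mu (A `&` X) + mu (A `\` X))%E.
Proof.
move=> mA mX; rewrite /util.
have AE : A = (A `&` X) `|` (A `\` X) by rewrite -setIUr setUCr setIT.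
have mf : measurable_fun [set: LR R] (fun x => if x \in X then eps else 1).
  apply: measurable_fun_ifT.
  - apply: (measurable_fun_bool true).
    have -> : [set: LR R] `&` (fun x => x \in X) @^-1` [set true] = X.
      apply/seteqP; split => x /=; first by case => _ /set_mem.
      by move=> Xx; split => //; rewrite mem_set.
    exact: mX.
  - exact: measurable_cst.
  - exact: measurable_cst.
have disj : [disjoint A `&` X & A `\` X].
  by apply/disj_set2P; apply/seteqP; split => x // [[_ Xx] [_ nXx]].
rewrite [in LHS]AE integral_setU //; last first.
- have h := proj2 (measurable_realfun.measurable_EFinP _ _) mf.
  exact: (measurable_funS measurableT (@subsetT _ _) h).
- exact: measurableD.
- exact: measurableI.
congr (_ + _)%E.
  rewrite (eq_integral (fun _ => eps%:E)).
    by rewrite integral_cst //; exact: measurableI.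
  by move=> x; rewrite inE => -[_ Xx]; rewrite mem_set.
rewrite (eq_integral (fun _ => 1%:E)).
  by rewrite integral_cst ?mul1e //; exact: measurableD.
by move=> x; rewrite inE => -[_ nXx]; rewrite memNset.
Qed.

Lemma m_set0 : m set0 = 0.
Proof. by rewrite /m /leb measure0. Qed.

Lemma util_one_m A : measurable A -> A `<=` U ->
  util (fun _ => 1) A = (m A)%:E.
Proof. by move=> mA sA; rewrite util_one // mE. Qed.

Lemma util_f22_m (X : set (LR R)) (eps : R) A : measurable A -> measurable X ->
  A `<=` U ->
  util (fun x => if x \in X then eps else 1) A =
  (eps * m (A `&` X) + m (A `\` X))%:E.
Proof.
move=> mA mX sA; rewrite util_f22 // !mE //.
- exact: measurableD.
- by move=> x [/sA].
- exact: measurableI.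
- by move=> x [/sA].
Qed.

Lemma aux (X1 X2 Y1 Y2 : set (LR R)) (eps : R) :
  0 < eps < 1 ->
  measurable X1 -> measurable X2 -> measurable Y1 -> measurable Y2 ->
  X1 `<=` U -> X2 `<=` U -> Y1 `<=` U -> Y2 `<=` U ->
  X1 `&` X2 = set0 -> Y1 `&` Y2 = set0 ->
  ((2^-1)%:E * util (fun _ => 1%R) U <= util (fun _ => 1%R) X1)%E ->
  ((2^-1)%:E * util (fun _ => 1%R) U <= util (fun _ => 1%R) X2)%E ->
  ((2^-1)%:E * util (fun _ => 1%R) U <= util (fun _ => 1%R) Y1)%E ->
  (util (fun _ => 1%R) Y2 <= util (fun _ => 1%R) X2)%E ->
  (util (fun x => if x \in X1 then eps else 1%R) X2 <=
     util (fun x => if x \in X1 then eps else 1%R) Y2)%E ->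
  [/\ mu X1 = (2^-1)%:E, mu X2 = (2^-1)%:E,
      mu (symdiff Y1 X1) = 0%E & mu (symdiff Y2 X2) = 0%E].
Proof.
move=> /andP[e0 e1] mX1 mX2 mY1 mY2 sX1 sX2 sY1 sY2 dX dY.
have hU := munit.
rewrite !util_one_m // !util_f22_m // -!EFinM !lee_fin m_unit mulr1.
move=> P1 P2 P3 T1 T2.
have H3 := mU _ _ mX1 mX2 sX1 sX2 dX.
have H4 : m (X1 `|` X2) <= m U.
  apply: mle => //; first exact: measurableU.
  by move=> x [/sX1|/sX2].
rewrite m_unit in H4.
have ea : m X1 = 2^-1 by lra.
have eb : m X2 = 2^-1 by lra.
pose N := U `\` (X1 `|` X2).
have mN : measurable N by apply: measurableD => //; exact: measurableU.
have sN : N `<=` U by move=> x [].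
have H5 := mDI _ _ hU (measurableU _ _ mX1 mX2) (@subset_refl _ U).
rewrite m_unit setIidr in H5; last by move=> x [/sX1|/sX2].
have mN0 : m N = 0 by rewrite /N; lra.
have H6 := mDI _ _ mX2 mX1 sX2.
rewrite setIC dX m_set0 in H6 T2.
have H7 := mDI _ _ mY2 mX1 sY2.
have p0 := m_ge0 (Y2 `&` X1).
have q0 := m_ge0 (Y2 `\` X1).
have pz : m (Y2 `&` X1) = 0 by nra.
have eY2 : m Y2 = 2^-1 by rewrite pz mulr0 in T2; lra.
have H8 : m (Y2 `\` X2) <= 0.
  have := mU2 _ _ (measurableI _ _ mY2 mX1) mN (fun x h => sY2 x (proj1 h)) sN.
  have : m (Y2 `\` X2) <= m ((Y2 `&` X1) `|` N).
    apply: mle.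
    - exact: measurableD.
    - by apply: measurableU => //; exact: measurableI.
    - by move=> x [[/sY2]|[]].
    move=> x [Y2x nX2x]; have [X1x|nX1x] := pselect (X1 x).
      by left.
    by right; split; [exact: sY2|case].
  lra.
have H9 := mDI _ _ mY2 mX2 sY2.
have H10 := mDI _ _ mX2 mY2 sX2.
rewrite setIC in H10.
have g1 := m_ge0 (Y2 `\` X2).
have g2 := m_ge0 (X2 `\` Y2).
have H11 := mU _ _ mY1 mY2 sY1 sY2 dY.
have H12 : m (Y1 `|` Y2) <= 1.
  rewrite -m_unit; apply: mle => //; first exact: measurableU.
  by move=> x [/sY1|/sY2].
have eY1 : m Y1 = 2^-1 by lra.
have H13 : m (Y1 `\` X1) <= 0.
  have := mU2 _ _ mN (measurableD mX2 mY2) sN (fun x h => sX2 x (proj1 h)).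
  have : m (Y1 `\` X1) <= m (N `|` (X2 `\` Y2)).
    apply: mle.
    - exact: measurableD.
    - by apply: measurableU => //; exact: measurableD.
    - by move=> x [[]|[/sX2]].
    move=> x [Y1x nX1x]; have [X2x|nX2x] := pselect (X2 x).
      right; split => // Y2x.
      by have : (Y1 `&` Y2) x by []; rewrite dY.
    by left; split; [exact: sY1|case].
  lra.
have H14 := mDI _ _ mY1 mX1 sY1.
have H15 := mDI _ _ mX1 mY1 sX1.
rewrite setIC in H15.
have g3 := m_ge0 (Y1 `\` X1).
have g4 := m_ge0 (X1 `\` Y1).
have symd A B : measurable A -> measurable B -> A `<=` U -> B `<=` U ->
    m (A `\` B) = 0 -> m (B `\` A) = 0 -> mu (symdiff A B) = 0%E.
  move=> mA mB sA sB h1 h2.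
  have ms : measurable (symdiff A B) by apply: measurableU; exact: measurableD.
  have ss : symdiff A B `<=` U by move=> x [[/sA]|[/sB]].
  rewrite mE //; congr EFin.
  have := mU2 _ _ (measurableD mA mB) (measurableD mB mA) (fun x h => sA x (proj1 h))
    (fun x h => sB x (proj1 h)).
  have := m_ge0 (symdiff A B).
  rewrite /symdiff; lra.
split.
- by rewrite mE // ea.
- by rewrite mE // eb.
- by apply: symd => //; lra.
- by apply: symd => //; lra.
Qed.
End H.

Theorem proposition2 (R : realType) (M : mechanism R) (eps : R) :
  valid_mechanism M -> truthful M -> proportional M ->
  0 < eps < 1 ->
  let one := fun _ : R => (1 : R) in
  let X1 := (M one one).1 in
  let X2 := (M one one).2 in
  let f22 := fun x : R => if x \in X1 then eps else 1 in
  in_dom f22 ->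
  [/\ @leb R X1 = (2^-1)%:E, @leb R X2 = (2^-1)%:E,
      @leb R (symdiff (M one f22).1 X1) = 0%E &
      @leb R (symdiff (M one f22).2 X2) = 0%E].
Proof.
move=> vM [tr1 tr2] pM he one X1 X2 f22 df22.
have d1 : in_dom one.
  split; last by move=> x _; exact: ltr01.
  exists 1%N, (fun i : nat => i%:R); split => //.
  - by move=> i; rewrite ltnS leqn0 => /eqP ->; rewrite ltr01.
  - by move=> i _; exists 1.
have [mX1 mX2 sX1 sX2 dX] := vM one one d1 d1.
have [mY1 mY2 sY1 sY2 dY] := vM one f22 d1 df22.
have [P1 P2] := pM one one d1 d1.
have [P3 _] := pM one f22 d1 df22.
have T1 := tr2 one one f22 d1 d1 df22.
have T2 := tr2 one f22 one d1 df22 d1.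
exact: (@aux R _ _ _ _ eps he mX1 mX2 mY1 mY2 sX1 sX2 sY1 sY2 dX dY P1 P2 P3 T1 T2).
Qed.
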